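(* Let $m\ge 2$ and let $a_1,a_2,b_1,\dots,b_m,c_1,\dots,c_m$ be real numbers with $a_1\ne a_2$, $b_1>b_2>\dots>b_m$, $c_1>c_2>\dots>c_m$, and $a_1+(m-1)a_2=\sum_{i=1}^m(b_i+c_i)$. Let ${\bf B}$ be the $m\times m$ matrix with $B_{ij}=b_i+c_{m+1-i}-a_2$ for $i<j$, $B_{ii}=b_i$, $B_{ij}=0$ for $i>j$; for each $i$ let ${\bf v}_i$ be the eigenvector of ${\bf B}$ with eigenvalue $b_i$ whose $i$-th coordinate is $1$ and whose later coordinates vanish. Assume $b_i+c_k-a_2\ne0$ for all $i,k$ and let $\langle\cdot,\cdot\rangle$ be the real symmetric bilinear form with $\langle{\bf v}_i,{\bf v}_j\rangle=0$ for $i\ne j$ and $$\langle{\bf v}_i,{\bf v}_i\rangle=\frac{\prod_{k=i+1}^m(b_i-b_k)}{\prod_{k=1}^{i-1}(b_i-b_k)}\cdot\frac{\prod_{k=m+2-i}^m(b_i+c_k-a_2)}{\prod_{k=1}^{m+1-i}(b_i+c_k-a_2)}.$$ Then this form is sign-definite (positive- or negative-definite) if and only if one of the following two systems of inequalities holds: (I) $b_{m+1-i}+c_i>a_2>b_{m+1-i}+c_{i+1}$ for $i=1,\dots,m-1$, and $b_1+c_m>a_2$; (II) $b_i+c_{m-i}>a_2>b_i+c_{m+1-i}$ for $i=1,\dots,m-1$, and $a_2>b_m+c_1$. Moreover, if $\epsilon\langle\cdot,\cdot\rangle$ is positive-definite for $\epsilon=\pm1$, then $\epsilon=\mathrm{sign}(a_1-a_2)$;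 if (I) holds then $a_1>a_2$, and if (II) holds then $a_1<a_2$.
   Context: Empty products equal $1$. *)

(* Defs.v *)
From HB Require Import structures.
From mathcomp Require Import all_boot all_order all_algebra.
Set Implicit Arguments. Unset Strict Implicit. Unset Printing Implicit Defensive.
Import Order.TTheory GRing.Theory Num.Theory.
Local Open Scope ring_scope.

(* Sequences b, c are 1-indexed functions nat -> R (only indices 1..m matter).
   Matrix rows/columns are 'I_m, the 0-based ordinal i standing for index i+1. *)

Definition Bmat (R : ringType) (m : nat) (a2 : R) (b c : nat -> R) : 'M[R]_m :=
  \matrix_(i < m, j < m)
     if (i < j)%N then b i.+1 + c (m - i)%N - a2
     else if i == j then b i.+1 else 0.

Definition dval (R : fieldType) (m : nat) (a2 : R) (b c : nat -> R) (i : nat) : R :=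
  (\prod_(i.+1 <= k < m.+1) (b i - b k)) / (\prod_(1 <= k < i) (b i - b k)) *
  ((\prod_((m.+2 - i)%N <= k < m.+1) (b i + c k - a2)) /
   (\prod_(1 <= k < (m.+2 - i)%N) (b i + c k - a2))).

Definition bform (R : ringType) (m : nat) (G : 'M[R]_m) (x y : 'cV[R]_m) : R :=
  (x^T *m G *m y) 0 0.

Definition posdef (R : numDomainType) (m : nat) (G : 'M[R]_m) : Prop :=
  forall x : 'cV[R]_m, x != 0 -> 0 < bform G x x.

Definition systemI (R : numDomainType) (m : nat) (a2 : R) (b c : nat -> R) : Prop :=
  (forall i, (1 <= i < m)%N ->
     a2 < b (m.+1 - i)%N + c i /\ b (m.+1 - i)%N + c i.+1 < a2)
  /\ a2 < b 1%N + c m.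

Definition systemII (R : numDomainType) (m : nat) (a2 : R) (b c : nat -> R) : Prop :=
  (forall i, (1 <= i < m)%N ->
     a2 < b i + c (m - i)%N /\ b i + c (m.+1 - i)%N < a2)
  /\ b m + c 1%N < a2.

(* Main.v *)
Require Import Defs.
From HB Require Import structures.
From mathcomp Require Import all_boot all_order all_algebra.
From mathcomp Require Import zify ring lra.
Import Order.TTheory GRing.Theory Num.Theory.

Lemma thresh (q : pred nat) a n :
  (forall k k', (a <= k)%N -> (k <= k')%N -> (k' < a + n)%N -> q k -> q k') ->
  forall k, (a <= k < a + n)%N -> q k = (a + n <= k + count q (iota a n))%N.
Proof.
elim: n a => [|n IH] a Hq k Hk; first by lia.
rewrite /= .
case qa: (q a).
  have -> : count q (iota a.+1 n) = n.
    rewrite (eq_in_count (a2 := predT)) ?count_predT ?size_iota //.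
    move=> j; rewrite mem_iota => Hj; apply: (Hq a) => //; lia.
  have -> : q k by apply: (Hq a) => //; lia.
  symmetry; apply/idP; lia.
have Hc := count_size q (iota a.+1 n); rewrite size_iota in Hc.
case: (ltnP a k) => Hak.
  rewrite (IH a.+1) //; last lia.
    apply/idP/idP; lia.
  by move=> k1 k2 ? ? ?; apply: Hq; lia.
have -> : k = a by lia.
rewrite qa; symmetry; apply/idP; lia.
Qed.

Lemma comb (f : nat -> nat) (m : nat) (e : bool) :
  (1 <= m)%N ->
  (forall i, (1 <= i < m)%N -> f i <= f i.+1)%N ->
  (forall i, (1 <= i <= m)%N -> f i <= m)%N ->
  (forall i, (1 <= i <= m)%N -> odd (i.-1 + f i) = e) ->
  forall i, (1 <= i <= m)%N -> f i = (if e then i else i.-1).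
Proof.
move=> Hm Hmono Hb Hp.
have Hs : forall i, (1 <= i < m)%N -> (f i < f i.+1)%N.
  move=> i Hi; rewrite ltn_neqAle Hmono // andbT; apply/negP => /eqP E.
  have P1 := Hp i ltac:(lia); have P2 := Hp i.+1 ltac:(lia).
  rewrite -E /= in P2.
  have E2 : i = i.-1.+1 by lia.
  have E3 : odd (i + f i) = ~~ odd (i.-1 + f i) by rewrite {1}E2 addSn.
  rewrite E3 P1 in P2.
  by move: P2; case: (e).
have Hd : forall d i, (1 <= i)%N -> (i + d <= m)%N -> (f i + d <= f (i + d))%N.
  elim=> [|d IH] i H1 H2; first by rewrite !addn0.
  have := IH i H1 ltac:(lia); have := Hs (i + d)%N ltac:(lia).
  rewrite !addnS; lia.
have H1m := Hd m.-1 1 (leqnn _) ltac:(lia).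
have Hbm := Hb m ltac:(lia).
have EE : (1 + m.-1 = m)%N by lia.
rewrite EE in H1m; clear EE.
have P1 := Hp 1 ltac:(lia); have Pm := Hp m ltac:(lia).
move=> i Hi.
have Ha := Hd (i - 1)%N 1 (leqnn _) ltac:(lia).
have Hb2 := Hd (m - i)%N i ltac:(lia) ltac:(lia).
have EE : (1 + (i - 1) = i)%N by lia.
rewrite EE in Ha; clear EE.
have EE : (i + (m - i) = m)%N by lia.
rewrite EE in Hb2; clear EE.
case: (e) in P1 Pm *; move=> /=.
  have F1 : f 1 = 1%N.
    have : (f 1 <= 1)%N by lia.
    by case: (f 1) P1 => [|[|]].
  lia.
have F1 : f 1 = 0%N.
  have : (f 1 <= 1)%N by lia.
  by case: (f 1) P1 => [|[|]].
have Fm : f m != m.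
  apply/eqP => E; rewrite E in Pm.
  have Em : (m.-1 + m = (m.-1).*2.+1)%N by rewrite -addnn; lia.
  by rewrite Em /= odd_double in Pm.
lia.
Qed.

Local Open Scope ring_scope.

Lemma sg_prod_seq (R : realFieldType) (F : nat -> R) (s : seq nat) :
  (forall k, k \in s -> F k != 0) ->
  Num.sg (\prod_(k <- s) F k) = (-1) ^+ count (fun k => F k < 0) s.
Proof.
elim: s => [|x s IH] H; first by rewrite big_nil sgr1.
rewrite big_cons sgrM IH /=; last by move=> k ks; apply: H; rewrite inE ks orbT.
by rewrite exprD neqr0_sign // H // inE eqxx.
Qed.


Lemma posdef_diag (R : realFieldType) m (v : 'I_m -> 'cV[R]_m) (G : 'M[R]_m) :
  (forall i : 'I_m, v i i 0 = 1) ->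
  (forall (i k : 'I_m), (i < k)%N -> v i k 0 = 0) ->
  (forall (i j : 'I_m), i != j -> bform G (v i) (v j) = 0) ->
  posdef G <-> (forall i, 0 < bform G (v i) (v i)).
Proof.
move=> Hd Ht Ho; split.
  move=> HG i; apply: HG; apply/negP => /eqP E.
  by have := Hd i; rewrite E mxE => /eqP; rewrite eq_sym oner_eq0.
move=> Hp x x0.
pose V : 'M[R]_m := \matrix_(k, i) v i k 0.
have HV : V \in unitmx.
  rewrite unitmxE -det_tr det_trig.
    by rewrite big1 ?unitr1 // => i _; rewrite !mxE Hd.
  by apply/is_trig_mxP => i j Hij; rewrite !mxE Ht.
pose al := invmx V *m x.
have Hx : x = V *m al by rewrite /al mulKVmx.
have al0 : al != 0.
  by apply: contraNneq x0 => E; rewrite Hx E mulmx0.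
clearbody al.
have HE : forall i j, (V^T *m G *m V) i j = bform G (v i) (v j).
  move=> i j; rewrite /bform !mxE; apply: eq_bigr => l _; rewrite !mxE; congr (_ * _).
  by apply: eq_bigr => k _; rewrite !mxE.
have HM : V^T *m G *m V = diag_mx (\row_i bform G (v i) (v i)).
  apply/matrixP => i j; rewrite HE !mxE.
  case: eqP => [->|/eqP ne]; first by rewrite mulr1n.
  by rewrite mulr0n Ho.
rewrite /bform Hx trmx_mul.
have -> : al^T *m V^T *m G *m (V *m al) = al^T *m (V^T *m G *m V) *m al by rewrite !mulmxA.
rewrite HM mul_mx_diag mxE.
move/matrix0Pn: al0 => [j [k]]; rewrite (ord1 k) => aj.
rewrite (bigD1 j) //=.
have H1 : 0 < (\matrix_(i, j0) (al^T i j0 * (\row_i0 bform G (v i0) (v i0)) 0 j0)) 0 j * al j 0.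
  rewrite !mxE mulrAC; apply: mulr_gt0; last exact: Hp.
  by rewrite lt0r mulf_neq0 //= (sqr_ge0 (al _ 0)).
have H2 : 0 <= \sum_(i < m | i != j) (\matrix_(i, j0) (al^T i j0 * (\row_i0 bform G (v i0) (v i0)) 0 j0)) 0 i * al i 0.
  apply: sumr_ge0 => i _; rewrite !mxE mulrAC; apply: mulr_ge0; last exact: ltW.
  exact: (sqr_ge0 (al _ 0)).
lra.
Qed.

Lemma strict_dec (R : realFieldType) (b : nat -> R) m :
  (forall i, (1 <= i < m)%N -> b i.+1 < b i) ->
  forall k k', (1 <= k)%N -> (k < k')%N -> (k' <= m)%N -> b k' < b k.
Proof.
move=> Hb k; elim=> [|k' IH] // H1 H2 H3.
case: (ltngtP k k') => H4; first (apply: lt_trans (IH H1 H4 ltac:(lia)); apply: Hb; lia).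
  lia.
by rewrite -H4; apply: Hb; lia.
Qed.
Arguments strict_dec {R b m}.

Lemma weak_dec (R : realFieldType) (b : nat -> R) m :
  (forall i, (1 <= i < m)%N -> b i.+1 < b i) ->
  forall k k', (1 <= k)%N -> (k <= k')%N -> (k' <= m)%N -> b k' <= b k.
Proof.
move=> Hb k k' H1 H2 H3; case: (ltngtP k k') => H4; last by rewrite H4.
  by apply: ltW; apply: (strict_dec Hb); lia.
lia.
Qed.

Lemma dval_sg (R : realFieldType) m (a2 : R) (b c : nat -> R) i :
  (forall i, (1 <= i < m)%N -> b i.+1 < b i) ->
  (forall i k, (1 <= i <= m)%N -> (1 <= k <= m)%N -> b i + c k - a2 != 0) ->
  (1 <= i <= m)%N ->
  Num.sg (dval m a2 b c i) =
    (-1) ^+ (i.-1 + count (fun k => b i + c k - a2 < 0) (iota 1 m)).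
Proof.
move=> Hb Hx Hi.
rewrite /dval !sgrM !sgrV.
have -> : Num.sg (\prod_(i.+1 <= k < m.+1) (b i - b k)) = 1.
  rewrite sg_prod_seq; last first.
    move=> k; rewrite mem_index_iota => Hk; rewrite subr_eq0 eq_sym.
    by rewrite lt_eqF //; apply: (strict_dec Hb); lia.
  rewrite (eq_in_count (a2 := pred0)) ?count_pred0 ?expr0 //.
  move=> k; rewrite mem_index_iota => Hk /=; apply/negbTE; rewrite -leNgt subr_ge0.
  by apply: ltW; apply: (strict_dec Hb); lia.
have -> : Num.sg (\prod_(1 <= k < i) (b i - b k)) = (-1) ^+ i.-1.
  rewrite sg_prod_seq; last first.
    move=> k; rewrite mem_index_iota => Hk; rewrite subr_eq0.
    by rewrite lt_eqF //; apply: (strict_dec Hb); lia.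
  rewrite (eq_in_count (a2 := predT)) ?count_predT ?size_iota ?subn1 //.
  move=> k; rewrite mem_index_iota => Hk /=; rewrite subr_lt0.
  by apply: (strict_dec Hb); lia.
rewrite mul1r exprD; congr (_ * _).
rewrite mulrC -sgrM -(@big_cat_nat _ _ _ (m.+2 - i)); [|lia|lia].
rewrite sg_prod_seq.
  by rewrite /index_iota subn1.
move=> k; rewrite mem_index_iota => Hk; apply: Hx; lia.
Qed.

Lemma sg_sign (R : realFieldType) (d : R) n : Num.sg d = (-1) ^+ n ->
  ((0 < d) = ~~ odd n) * ((d < 0) = odd n).
Proof.
move=> H; rewrite -sgr_gt0 -sgr_lt0 H -signr_odd.
case: (odd n) => /=; rewrite ?expr1 ?expr0.
  by rewrite ltrN10 (lt_gtF (ltrN10 R)).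
by rewrite ltr01 (lt_gtF (@ltr01 R)).
Qed.

Lemma pos_of (R : realFieldType) (x : R) : x != 0 -> (x < 0) = false -> 0 < x.
Proof. by move=> H0 H1; rewrite lt_def H0 /= leNgt H1. Qed.

Lemma bformN (R : realFieldType) m (G : 'M[R]_m) x y :
  bform (- G) x y = - bform G x y.
Proof. by rewrite /bform mulmxN mulNmx mxE. Qed.

Lemma sum_pos (R : realFieldType) (F : nat -> R) m : (1 <= m)%N ->
  (forall j, (1 <= j <= m)%N -> 0 < F j) -> 0 < \sum_(1 <= j < m.+1) F j.
Proof.
move=> Hm H; rewrite big_nat_recr //=.
have : 0 <= \sum_(1 <= j < m) F j.
  rewrite big_seq; apply: sumr_ge0 => j; rewrite mem_index_iota => Hj.
  by apply: ltW; apply: H; lia.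
have := H m ltac:(lia); lra.
Qed.

Lemma sum_neg (R : realFieldType) (F : nat -> R) m : (1 <= m)%N ->
  (forall j, (1 <= j <= m)%N -> F j < 0) -> \sum_(1 <= j < m.+1) F j < 0.
Proof.
move=> Hm H; rewrite -oppr_gt0 -sumrN; apply: sum_pos => // j Hj.
by rewrite oppr_gt0; apply: H.
Qed.

Lemma ord_all (m : nat) (P : nat -> Prop) :
  (forall i : 'I_m, P i.+1) <-> (forall i, (1 <= i <= m)%N -> P i).
Proof.
split=> H i.
  move=> Hi; have Hi' : (i.-1 < m)%N by lia.
  have := H (Ordinal Hi') => /=; have -> : i.-1.+1 = i by lia. done.
by apply: H; have := ltn_ord i; lia.
Qed.
Arguments sg_sign {R d n}.
Arguments pos_of {R x}.
Arguments ord_all {m} P.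
Arguments posdef_diag {R m v G}.

Theorem theorem2p7 (R : realFieldType) (m : nat) (a1 a2 : R) (b c : nat -> R)
  (v : 'I_m -> 'cV[R]_m) (G : 'M[R]_m) :
  (2 <= m)%N ->
  a1 != a2 ->
  (forall i, (1 <= i < m)%N -> b i.+1 < b i) ->
  (forall i, (1 <= i < m)%N -> c i.+1 < c i) ->
  a1 + (m - 1)%:R * a2 = \sum_(1 <= i < m.+1) (b i + c i) ->
  (* v i is the eigenvector of B for eigenvalue b_{i+1}, normalized *)
  (forall i : 'I_m, Bmat m a2 b c *m v i = b i.+1 *: v i) ->
  (forall i : 'I_m, v i i 0 = 1) ->
  (forall (i k : 'I_m), (i < k)%N -> v i k 0 = 0) ->
  (forall i k, (1 <= i <= m)%N -> (1 <= k <= m)%N -> b i + c k - a2 != 0) ->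
  (* the real symmetric bilinear form with the prescribed values on the v_i *)
  G^T = G ->
  (forall (i j : 'I_m), i != j -> bform G (v i) (v j) = 0) ->
  (forall i : 'I_m, bform G (v i) (v i) = dval m a2 b c i.+1) ->
  ((posdef G \/ posdef (- G)) <-> (systemI m a2 b c \/ systemII m a2 b c))
  /\ (forall eps : R, (eps = 1 \/ eps = -1) -> posdef (eps *: G) ->
        eps = Num.sg (a1 - a2))
  /\ (systemI m a2 b c -> a2 < a1)
  /\ (systemII m a2 b c -> a1 < a2).
Proof.
move=> Hm Ha Hb Hc Hsum Heig Hv1 Hv0 Hx GT Ho Hd.
pose N := fun i => count (fun k => b i + c k - a2 < 0) (iota 1 m).
have Hsg : forall i, (1 <= i <= m)%N ->
    Num.sg (dval m a2 b c i) = (-1) ^+ (i.-1 + N i).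
  by move=> i Hi; exact: dval_sg.
have TH : forall i k, (1 <= k <= m)%N ->
    (b i + c k - a2 < 0) = (m.+1 <= k + N i)%N.
  move=> i k Hk.
  have HH := @thresh (fun k => b i + c k - a2 < 0) 1 m.
  rewrite add1n in HH; apply: HH; last by lia.
  move=> k1 k2 H1 H2 H3 /= Hq.
  have := @weak_dec R c m Hc k1 k2 H1 H2 ltac:(lia); lra.
have Nmono : forall i, (1 <= i < m)%N -> (N i <= N i.+1)%N.
  move=> i Hi; apply: sub_count => k /= Hk; have := Hb i Hi; lra.
have Nle : forall i, (1 <= i <= m)%N -> (N i <= m)%N.
  move=> i _; rewrite -[X in (_ <= X)%N](size_iota 1 m); apply: count_size.
have Pos : (forall i, (1 <= i <= m)%N -> 0 < dval m a2 b c i) <->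
           (forall i, (1 <= i <= m)%N -> N i = i.-1).
  split=> H.
    move=> i Hi; apply: (@comb N m false ltac:(lia) Nmono Nle _ i Hi).
    by move=> j Hj; apply/negbTE; rewrite -(sg_sign (Hsg j Hj)).1; exact: H.
  by move=> i Hi; rewrite (sg_sign (Hsg i Hi)).1 H // addnn odd_double.
have Neg : (forall i, (1 <= i <= m)%N -> dval m a2 b c i < 0) <->
           (forall i, (1 <= i <= m)%N -> N i = i).
  split=> H.
    move=> i Hi; apply: (@comb N m true ltac:(lia) Nmono Nle _ i Hi).
    by move=> j Hj; rewrite -(sg_sign (Hsg j Hj)).2; exact: H.
  move=> i Hi; rewrite (sg_sign (Hsg i Hi)).2 H //.
  have -> : (i.-1 + i = (i.-1).*2.+1)%N by rewrite -addnn; lia.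
  by rewrite /= odd_double.
have SI : systemI m a2 b c <-> (forall i, (1 <= i <= m)%N -> N i = i.-1).
  split.
    case=> HI Hlast i Hi.
    case: (ltnP 1 i) => Hi1.
      pose j := (m.+1 - i)%N.
      have Hjd : j = (m.+1 - i)%N by [].
      have Hj : (1 <= j < m)%N by lia.
      have [h1 h2] := HI j Hj.
      have Ej : (m.+1 - j = i)%N by lia.
      rewrite Ej in h1 h2.
      have T1 := TH i j ltac:(lia); have T2 := TH i j.+1 ltac:(lia).
      have F1 : (b i + c j - a2 < 0) = false by apply/negbTE; rewrite -leNgt; lra.
      have F2 : (b i + c j.+1 - a2 < 0) by lra.
      rewrite F1 in T1; rewrite F2 in T2.
      move: T1 T2 => /esym/negbT T1 /esym T2.
      lia.
    have Ei : i = 1%N by lia.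
    rewrite Ei.
    have T := TH 1%N m ltac:(lia).
    have F : (b 1 + c m - a2 < 0) = false by apply/negbTE; rewrite -leNgt; lra.
    rewrite F in T; move: T => /esym/negbT T; lia.
  move=> H; split.
    move=> j Hj.
    pose i := (m.+1 - j)%N.
    have Hid : i = (m.+1 - j)%N by [].
    have Hi : (1 <= i <= m)%N by lia.
    have HN := H i Hi.
    have T1 := TH i j ltac:(lia); have T2 := TH i j.+1 ltac:(lia).
    rewrite HN in T1 T2.
    have E1 : (m.+1 <= j + i.-1)%N = false by apply/negbTE; lia.
    have E2 : (m.+1 <= j.+1 + i.-1)%N by lia.
    rewrite E1 in T1; rewrite E2 in T2.
    have P1 := pos_of (Hx i j Hi ltac:(lia)) T1.
    have P2 : b i + c j.+1 - a2 < 0 by rewrite T2.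
    rewrite -/i; split; lra.
  have HN := H 1%N ltac:(lia).
  have T := TH 1%N m ltac:(lia).
  rewrite HN in T.
  have E : (m.+1 <= m + (1%N).-1)%N = false by apply/negbTE; lia.
  rewrite E in T.
  have := pos_of (Hx 1%N m ltac:(lia) ltac:(lia)) T; lra.
have SII : systemII m a2 b c <-> (forall i, (1 <= i <= m)%N -> N i = i).
  split.
    case=> HII Hlast i Hi.
    case: (ltnP i m) => Him.
      have [h1 h2] := HII i ltac:(lia).
      have T1 := TH i (m - i)%N ltac:(lia); have T2 := TH i (m.+1 - i)%N ltac:(lia).
      have F1 : (b i + c (m - i)%N - a2 < 0) = false by apply/negbTE; rewrite -leNgt; lra.
      have F2 : (b i + c (m.+1 - i)%N - a2 < 0) by lra.
      rewrite F1 in T1; rewrite F2 in T2.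
      move: T1 T2 => /esym/negbT T1 /esym T2.
      lia.
    have Ei : i = m by lia.
    rewrite Ei.
    have T := TH m 1%N ltac:(lia).
    have F : (b m + c 1%N - a2 < 0) by lra.
    rewrite F in T; move: T => /esym T; have := Nle m ltac:(lia); lia.
  move=> H; split.
    move=> i Hi.
    have HN := H i ltac:(lia).
    have T1 := TH i (m - i)%N ltac:(lia); have T2 := TH i (m.+1 - i)%N ltac:(lia).
    rewrite HN in T1 T2.
    have E1 : (m.+1 <= (m - i) + i)%N = false by apply/negbTE; lia.
    have E2 : (m.+1 <= (m.+1 - i) + i)%N by lia.
    rewrite E1 in T1; rewrite E2 in T2.
    have P1 := pos_of (Hx i (m - i)%N ltac:(lia) ltac:(lia)) T1.
    have P2 : b i + c (m.+1 - i)%N - a2 < 0 by rewrite T2.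
    split; lra.
  have HN := H m ltac:(lia).
  have T := TH m 1%N ltac:(lia).
  rewrite HN in T.
  have E : (m.+1 <= 1 + m)%N by lia.
  rewrite E in T.
  have P : b m + c 1%N - a2 < 0 by rewrite T.
  lra.
have PG : posdef G <-> systemI m a2 b c.
  split.
    move/(posdef_diag Hv1 Hv0 Ho) => H.
    apply/SI/Pos/(ord_all (fun i => 0 < dval m a2 b c i)) => i.
    by rewrite -Hd.
  move/SI/Pos/(ord_all (fun i => 0 < dval m a2 b c i)) => H.
  apply/(posdef_diag Hv1 Hv0 Ho) => i.
  by rewrite Hd.
have HoN : forall (i j : 'I_m), i != j -> bform (- G) (v i) (v j) = 0.
  by move=> i j ij; rewrite bformN Ho // oppr0.
have PNG : posdef (- G) <-> systemII m a2 b c.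
  split.
    move/(posdef_diag Hv1 Hv0 HoN) => H.
    apply/SII/Neg/(ord_all (fun i => dval m a2 b c i < 0)) => i.
    by rewrite -Hd -oppr_gt0 -bformN.
  move/SII/Neg/(ord_all (fun i => dval m a2 b c i < 0)) => H.
  apply/(posdef_diag Hv1 Hv0 HoN) => i.
  by rewrite bformN Hd oppr_gt0.
have A1 : systemI m a2 b c -> a2 < a1.
  case=> HI Hlast.
  have S : \sum_(1 <= i < m.+1) (b i + c i) =
           \sum_(1 <= j < m.+1) (b (m.+1 - j)%N + c j).
    rewrite !big_split /=; congr (_ + _).
    by rewrite big_nat_rev /=; apply: eq_bigr => j _; rewrite add1n subSS.
  have P : 0 < \sum_(1 <= j < m.+1) (b (m.+1 - j)%N + c j - a2).
    apply: sum_pos; first lia.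
    move=> j Hj; case: (ltnP j m) => Hjm.
      have [h1 _] := HI j ltac:(lia); lra.
    have Ej : j = m by lia.
    rewrite Ej subSnn; lra.
  have Hs2 : \sum_(1 <= j < m.+1) (b (m.+1 - j)%N + c j - a2) = a1 - a2.
    rewrite sumrB sumr_const_nat -S -Hsum subSS subn0 natrB; last by lia.
    rewrite -mulr_natl; ring.
  rewrite Hs2 in P; lra.
have A2 : systemII m a2 b c -> a1 < a2.
  case=> HII Hlast.
  have S : \sum_(1 <= i < m.+1) (b i + c i) =
           \sum_(1 <= j < m.+1) (b j + c (m.+1 - j)%N).
    rewrite !big_split /=; congr (_ + _).
    by rewrite big_nat_rev /=; apply: eq_bigr => j _; rewrite add1n subSS.
  have P : \sum_(1 <= j < m.+1) (b j + c (m.+1 - j)%N - a2) < 0.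
    apply: sum_neg; first lia.
    move=> j Hj; case: (ltnP j m) => Hjm.
      have [_ h2] := HII j ltac:(lia); lra.
    have Ej : j = m by lia.
    rewrite Ej subSnn; lra.
  have Hs2 : \sum_(1 <= j < m.+1) (b j + c (m.+1 - j)%N - a2) = a1 - a2.
    rewrite sumrB sumr_const_nat -S -Hsum subSS subn0 natrB; last by lia.
    rewrite -mulr_natl; ring.
  rewrite Hs2 in P; lra.
split.
  split.
    by case=> H; [left; apply/PG | right; apply/PNG].
  by case=> H; [left; apply/PG | right; apply/PNG].
split.
  move=> eps [->|->].
    rewrite scale1r => /PG /A1 H.
    by rewrite gtr0_sg // subr_gt0.
  rewrite scaleN1r => /PNG /A2 H.
  by rewrite ltr0_sg // subr_lt0.
by split.
Qed.
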